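(* Let $C_2>0$, $\rho=C_1\in\{1,-1\}$, $L>0$, $I=[0,L]$, and $Z(z)=\frac{1}{2C_2}(1-e^{-2C_2z})$, $T(z,t)=e^{-C_2z}t$, $\widetilde I=Z(I)$. Let $Q(Z,T)$ be a solution on $\widetilde I$ of $iQ_Z+Q_{TT}+\rho|Q|^2Q=0$ and let $v(z,t)=e^{i\frac{C_2}{4}t^2-\frac{C_2}{2}z}Q(Z(z),T(z,t))$, which is a solution on $I$ of $$iv_z+v_{tt}+C_1e^{-C_2z}|v|^2v+\frac{C_2^2}{4}t^2v=0 .$$ Then $t\mapsto t^2v(z,t)$ belongs to $L^2(\mathbb{R})$ for every $z\in I$ if and only if $T\mapsto T^2Q(Z,T)$ belongs to $L^2(\mathbb{R})$ for every $Z\in\widetilde I$. *)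

(* Defs.v *)
(* R : realType. Complex-valued functions are
   represented by their real and imaginary parts. *)
From HB Require Import structures.
From mathcomp Require Import all_boot all_order all_algebra.
From mathcomp Require Import all_classical all_reals all_analysis.
Set Implicit Arguments. Unset Strict Implicit. Unset Printing Implicit Defensive.
Import Order.TTheory GRing.Theory Num.Theory.
Import numFieldNormedType.Exports.
Local Open Scope classical_set_scope.
Local Open Scope ring_scope.

Definition Zmap {R : realType} (C2 z : R) : R :=
  (1 - expR (- (2 * C2 * z))) / (2 * C2).

Definition Tmap {R : realType} (C2 z t : R) : R := expR (- (C2 * z)) * t.

Definition Itilde {R : realType} (C2 L : R) : set R :=
  [set Zmap C2 z | z in `[0, L]].

Definition L2c {R : realType} (fr fi : R -> R) : Prop :=
  measurable_fun setT fr /\ measurable_fun setT fi /\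
  (lebesgue_measure).-integrable setT (fun x => ((fr x) ^+ 2 + (fi x) ^+ 2)%:E).

(* Q = qr + i qi is a (classical) solution on I~ of
     i Q_Z + Q_TT + rho |Q|^2 Q = 0,
   written in real and imaginary parts:
     Re:  - (qi)_Z + (qr)_TT + rho (qr^2+qi^2) qr = 0
     Im:    (qr)_Z + (qi)_TT + rho (qr^2+qi^2) qi = 0
   The equation is required at every interior point Z of I~ and every T. *)
Definition NLS_solution {R : realType} (rho C2 L : R) (qr qi : R -> R -> R) : Prop :=
  forall Zv Tv : R, 0 < Zv < Zmap C2 L ->
    (derivable (fun x => qr x Tv) Zv 1 /\ derivable (fun x => qi x Tv) Zv 1) /\
    (derivable (fun y => qr Zv y) Tv 1 /\ derivable (fun y => qi Zv y) Tv 1) /\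
    (derivable (derive1 (fun y => qr Zv y)) Tv 1 /\ derivable (derive1 (fun y => qi Zv y)) Tv 1) /\
    (- (derive1 (fun x => qi x Tv)) Zv + (derive1n 2 (fun y => qr Zv y)) Tv
       + rho * ((qr Zv Tv) ^+ 2 + (qi Zv Tv) ^+ 2) * qr Zv Tv = 0) /\
    ((derive1 (fun x => qr x Tv)) Zv + (derive1n 2 (fun y => qi Zv y)) Tv
       + rho * ((qr Zv Tv) ^+ 2 + (qi Zv Tv) ^+ 2) * qi Zv Tv = 0).

(* v(z,t) = exp(i C2 t^2/4 - C2 z/2) Q(Z(z), T(z,t)), real and imaginary parts *)
Definition v_re {R : realType} (C2 : R) (qr qi : R -> R -> R) (z t : R) : R :=
  let th := C2 / 4 * t ^+ 2 in
  expR (- (C2 / 2 * z)) *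
    (cos th * qr (Zmap C2 z) (Tmap C2 z t) - sin th * qi (Zmap C2 z) (Tmap C2 z t)).

Definition v_im {R : realType} (C2 : R) (qr qi : R -> R -> R) (z t : R) : R :=
  let th := C2 / 4 * t ^+ 2 in
  expR (- (C2 / 2 * z)) *
    (sin th * qr (Zmap C2 z) (Tmap C2 z t) + cos th * qi (Zmap C2 z) (Tmap C2 z t)).

(* Main.v *)
Require Import Defs.
From HB Require Import structures.
From mathcomp Require Import all_boot all_order all_algebra.
From mathcomp Require Import all_classical all_reals all_analysis.
From mathcomp Require Import ring lra.
From mathcomp Require Import measurable_realfun.
Import Order.TTheory GRing.Theory Num.Theory.
Import numFieldNormedType.Exports.
Local Open Scope classical_set_scope.
Local Open Scope ring_scope.

Section Helpers.
Context {R : realType}.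
Local Notation mu := (@lebesgue_measure R).

Lemma scale_preimage (a x y : R) : 0 < a ->
  ( *%R a) @^-1` `]x, y] = `]x / a, y / a]%classic.
Proof.
move=> a0; apply/seteqP; split => t /=; rewrite !in_itv /=.
  by rewrite ltr_pdivrMr // ler_pdivlMr // [t * a]mulrC.
by rewrite ltr_pdivrMr // ler_pdivlMr // [t * a]mulrC.
Qed.

Lemma integral_scale {a : R} (a0 : 0 < a) (g : R -> \bar R) :
  measurable_fun [set: R] g -> (forall x, (0 <= g x)%E) ->
  (\int[mu]_x g x = a%:E * \int[mu]_x g (a * x)%R)%E.
Proof.
move=> mg g0.
have mf : measurable_fun [set: measurableTypeR R] (( *%R a) : measurableTypeR R -> measurableTypeR R) by exact: measurable_realfun.mulrl_measurable.
pose nu := mscale (NngNum (ltW a0)) (measure_function_pushforward__canonical__measure_function_Measure mu mf).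
have munu : forall A, measurable A -> mu A = nu A.
  apply: lebesgue_measure_unique => //= _ [[x y]] _ <-.
  rewrite /nu /mscale /=. rewrite /pushforward. rewrite scale_preimage //.
  rewrite !lebesgue_measure_itv /= !lte_fin ltr_pM2r ?invr_gt0 //.
  case: ifP => _; last by rewrite mule0.
  rewrite -EFinM; congr EFin.
  by rewrite -!mulrBl mulrCA mulfV ?mulr1 // gt_eqF.
rewrite (eq_measure_integral nu); last by move=> A mA _; exact: munu.
rewrite ge0_integral_mscale //=.
by rewrite ge0_integral_pushforward //=.

Qed.


Lemma integrable_scale {a : R} (a0 : 0 < a) (h : R -> R) :
  mu.-integrable setT (fun x => (h x)%:E) ->
  mu.-integrable setT (fun x => (h (a * x))%:E).
Proof.
move=> /integrableP [mh hfin]; apply/integrableP; split.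
  apply/measurable_EFinP; apply: measurableT_comp; last exact: mulrl_measurable.
  by move/measurable_EFinP: mh.
have mh' : measurable_fun [set: R] (fun x => `|(h x)%:E|%E).
  exact: measurableT_comp.
have := integral_scale a0 _ mh' (fun x => abse_ge0 _).
move=> E.
have E' : (\int[mu]_x `|(h (a * x))%:E| = a^-1%:E * \int[mu]_x `|(h x)%:E|)%E.
  by rewrite E muleA -EFinM mulVf ?gt_eqF // mul1e.
rewrite E'; apply: lte_mul_pinfty => //.
by rewrite lee_fin invr_ge0 ltW.
Qed.

Lemma rot_L2c (a c : R) (th : R -> R) (fr fi : R -> R) : 0 < a ->
  measurable_fun [set: R] th ->
  L2c fr fi ->
  L2c (fun t => c * (cos (th t) * fr (a * t) - sin (th t) * fi (a * t)))
      (fun t => c * (sin (th t) * fr (a * t) + cos (th t) * fi (a * t))).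
Proof.
move=> a0 mth [mfr [mfi hint]].
have mfra : measurable_fun [set: R] (fun t => fr (a * t)).
  by apply: measurableT_comp => //; exact: mulrl_measurable.
have mfia : measurable_fun [set: R] (fun t => fi (a * t)).
  by apply: measurableT_comp => //; exact: mulrl_measurable.
have mc : measurable_fun [set: R] (fun t => cos (th t)).
  apply: measurableT_comp => //; apply: continuous_measurable_fun; exact: continuous_cos.
have ms : measurable_fun [set: R] (fun t => sin (th t)).
  apply: measurableT_comp => //; apply: continuous_measurable_fun; exact: continuous_sin.
split; [|split].
- apply: measurable_funM => //; apply: measurable_funB; exact: measurable_funM.
- apply: measurable_funM => //; apply: measurable_funD; exact: measurable_funM.
- have := integrableZl measurableT (c ^+ 2) (integrable_scale a0 _ hint).
  apply: (eq_integrable measurableT) => x _ /=.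
  rewrite -EFinM; congr EFin.
  have h := cos2Dsin2 (th x).
  rewrite -[LHS]mul1r -h; ring.
Qed.


Lemma rot_L2c_iff (a c : R) (th : R -> R) (fr fi : R -> R) : 0 < a -> c != 0 ->
  measurable_fun [set: R] th ->
  L2c fr fi <->
  L2c (fun t => c * (cos (th t) * fr (a * t) - sin (th t) * fi (a * t)))
      (fun t => c * (sin (th t) * fr (a * t) + cos (th t) * fi (a * t))).
Proof.
move=> a0 c0 mth; split; first exact: rot_L2c.
have ai0 : 0 < a^-1 by rewrite invr_gt0.
have mth' : measurable_fun [set: R] (fun x => - th (a^-1 * x)).
  apply: measurableT_comp; first exact: oppr_measurable.
  by apply: measurableT_comp => //; exact: mulrl_measurable.
move=> /(rot_L2c (a^-1) (c^-1) _ _ _ ai0 mth').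
have ex : forall x, a * (a^-1 * x) = x.
  by move=> x; rewrite mulrA mulfV ?mul1r // gt_eqF.
have e1 : forall f g, L2c f g -> f =1 fr -> g =1 fi -> L2c fr fi.
  by move=> f g + /funext ef /funext eg; rewrite ef eg.
move/e1; apply => x /=; rewrite !ex cosN sinN.
- have h := cos2Dsin2 (th (a^-1 * x)).
  rewrite -[RHS]mul1r -h; field; exact: c0.
- have h := cos2Dsin2 (th (a^-1 * x)).
  rewrite -[RHS]mul1r -h; field; exact: c0.
Qed.

End Helpers.

Theorem lemma3p4p1 (R : realType) (C2 rho L : R) (qr qi : R -> R -> R) :
  0 < C2 -> (rho = 1 \/ rho = -1) -> 0 < L ->
  NLS_solution rho C2 L qr qi ->
  (forall z, z \in `[0, L] ->
     L2c (fun t => t ^+ 2 * v_re C2 qr qi z t) (fun t => t ^+ 2 * v_im C2 qr qi z t))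
  <->
  (forall Zv, Itilde C2 L Zv ->
     L2c (fun Tv => Tv ^+ 2 * qr Zv Tv) (fun Tv => Tv ^+ 2 * qi Zv Tv)).
Proof.
move=> C20 _ L0 _.
have key : forall z, L2c (fun t => t ^+ 2 * v_re C2 qr qi z t)
                         (fun t => t ^+ 2 * v_im C2 qr qi z t) <->
    L2c (fun Tv => Tv ^+ 2 * qr (Zmap C2 z) Tv) (fun Tv => Tv ^+ 2 * qi (Zmap C2 z) Tv).
  move=> z.
  have a0 : 0 < expR (- (C2 * z)) by exact: expR_gt0.
  have c0 : expR (- (C2 / 2 * z)) / expR (- (C2 * z)) ^+ 2 != 0.
    by rewrite mulf_neq0 ?invr_eq0 ?expf_neq0 ?gt_eqF ?expR_gt0.
  have mth : measurable_fun [set: R] (fun t : R => C2 / 4 * t ^+ 2).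
    by apply: measurable_funM => //; exact: exprn_measurable.
  rewrite (rot_L2c_iff _ _ _ (fun Tv => Tv ^+ 2 * qr (Zmap C2 z) Tv)
     (fun Tv => Tv ^+ 2 * qi (Zmap C2 z) Tv) a0 c0 mth) /=.
  have E1 : (fun t => t ^+ 2 * v_re C2 qr qi z t) =
    (fun t => expR (- (C2 / 2 * z)) / expR (- (C2 * z)) ^+ 2 *
      (cos (C2 / 4 * t ^+ 2) * ((expR (- (C2 * z)) * t) ^+ 2 * qr (Zmap C2 z) (expR (- (C2 * z)) * t)) -
       sin (C2 / 4 * t ^+ 2) * ((expR (- (C2 * z)) * t) ^+ 2 * qi (Zmap C2 z) (expR (- (C2 * z)) * t)))).
    apply/funext => t; rewrite /v_re /Tmap /=; field.
    by rewrite gt_eqF.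
  have E2 : (fun t => t ^+ 2 * v_im C2 qr qi z t) =
    (fun t => expR (- (C2 / 2 * z)) / expR (- (C2 * z)) ^+ 2 *
      (sin (C2 / 4 * t ^+ 2) * ((expR (- (C2 * z)) * t) ^+ 2 * qr (Zmap C2 z) (expR (- (C2 * z)) * t)) +
       cos (C2 / 4 * t ^+ 2) * ((expR (- (C2 * z)) * t) ^+ 2 * qi (Zmap C2 z) (expR (- (C2 * z)) * t)))).
    apply/funext => t; rewrite /v_im /Tmap /=; field.
    by rewrite gt_eqF.
  by rewrite E1 E2.
split.
- move=> H Zv [z hz <-]; apply/key; apply: H; exact: hz.
- move=> H z hz; apply/key; apply: H; exists z => //.
Qed.
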